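(* Let $0<\epsilon\le\frac12$, $0<c'\le c$, and let $k\ge 2$ be an integer. Let $f$ be a real-valued function on the integers $m\ge k$ such that for every integer $n\ge 0$: (i) if $n\le 4k$, then $f(n+k)\le c'(n+k)$; (ii) if $n>4k$, then there exist integers $n_1,n_2$ with $n_1+n_2=n$ and $\frac12 n\le n_1\le (1-\epsilon)n$ such that $f(n+k)\le f(n_1+k)+f(n_2+k)+c(n+k)$. Then for every integer $n\ge 2k$, $$f(n+k)\le \frac{c}{\epsilon}\, n\ln n - ck .$$
   Context: $\ln$ denotes the natural logarithm. *)

(* Defs.v *)
From Stdlib Require Import Reals Lra Lia.

(* Main.v *)
Require Import Defs.
From Stdlib Require Import Reals Lra Lia Wf_nat Compare_dec.
Open Scope R_scope.

Lemma ln_ge_of x N : 0 < N -> exp x <= N -> x <= ln N.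
Proof.
  intros HN H. destruct (Rle_lt_or_eq_dec _ _ H) as [H'|H'].
  - rewrite <- (ln_exp x) at 1. left. apply ln_increasing; auto. apply exp_pos.
  - subst. rewrite ln_exp. lra.
Qed.

Lemma ln_bound a s : 0 < a -> 0 < s -> ln s - ln a >= 1 - a / s.
Proof.
  intros Ha Hs.
  assert (Hq : 0 < a / s) by (apply Rdiv_lt_0_compat; auto).
  assert (E : a = s * (a / s)) by (field; lra).
  assert (ln a = ln s + ln (a/s)) by (rewrite E at 1; apply ln_mult; auto).
  pose proof (exp_ineq1_le (ln (a/s))). rewrite exp_ln in H0 by auto. lra.
Qed.

Theorem lemma3 (eps c c' : R) (k : nat) (f : nat -> R) :
  0 < eps -> eps <= 1/2 -> 0 < c' -> c' <= c -> (2 <= k)%nat ->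
  (forall n : nat, (n <= 4 * k)%nat -> f (n + k)%nat <= c' * INR (n + k)) ->
  (forall n : nat, (4 * k < n)%nat ->
     exists n1 n2 : nat, (n1 + n2 = n)%nat /\
       INR n / 2 <= INR n1 /\ INR n1 <= (1 - eps) * INR n /\
       f (n + k)%nat <= f (n1 + k)%nat + f (n2 + k)%nat + c * INR (n + k)) ->
  forall n : nat, (2 * k <= n)%nat ->
    f (n + k)%nat <= c / eps * INR n * ln (INR n) - c * INR k.
Proof.
  intros He He2 Hc' Hcc Hk H1 H2 n.
  induction n as [n IH] using lt_wf_ind. intros Hn.
  assert (HK : 2 <= INR k) by (replace 2 with (INR 2) by (simpl; lra); apply le_INR; auto).
  assert (HNK : 2 * INR k <= INR n) by
    (replace (2 * INR k) with (INR (2*k)) by (rewrite mult_INR; simpl; lra); apply le_INR; auto).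
  assert (Hie : 2 <= / eps).
  { replace 2 with (/ (1/2)) by field. apply Rinv_le_contravar; lra. }
  assert (Hce : c / eps = c * / eps) by reflexivity.
  assert (Hc : 0 < c) by lra.
  assert (HcE : c * / eps * eps = c) by (field; lra).
  set (N := INR n) in *. set (K := INR k) in *.
  assert (HlnN : 1 <= ln N).
  { apply ln_ge_of; [lra|]. pose proof exp_le_3. lra. }
  destruct (le_lt_dec n (4*k)) as [Hs|Hl].
  - pose proof (H1 n Hs) as Hf. rewrite plus_INR in Hf. fold N K in Hf.
    assert (c' * (N+K) <= c * (N+K)) by (apply Rmult_le_compat_r; lra).
    assert (N * ln N >= N) by (assert (N*1 <= N * ln N) by (apply Rmult_le_compat_l; lra); lra).
    assert (c * / eps * (N * ln N) >= c * 2 * N).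
    { assert (c * / eps >= c * 2) by nra. assert (0 <= N) by lra. nra. }
    rewrite Hce. nra.
  - destruct (H2 n Hl) as (n1 & n2 & Hsum & Ha1 & Ha2 & Hf). fold N in Ha1, Ha2.
    assert (HN9 : 4 * K + 1 <= N).
    { replace (4*K+1) with (INR (S (4*k))) by (rewrite S_INR, mult_INR; simpl; fold K; lra).
      apply le_INR; lia. }
    set (A := INR n1) in *. set (B := INR n2).
    assert (HAB : A + B = N) by (unfold A, B, N; rewrite <- plus_INR; rewrite Hsum; auto).
    assert (HB : eps * N <= B) by lra.
    assert (HA : 0 < A) by lra.
    assert (HBp : 0 < B) by nra.
    assert (Hn1lt : (n1 < n)%nat) by (apply INR_lt; fold A N; lra).
    assert (Hn1k : (2*k <= n1)%nat).
    { apply INR_le. rewrite mult_INR. simpl. fold K A. lra. }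
    pose proof (IH n1 Hn1lt Hn1k) as IH1. fold A K in IH1.
    rewrite plus_INR in Hf. fold N K in Hf.
    pose proof (ln_bound A N HA ltac:(lra)) as LA.
    assert (EA : A * (1 - A / N) = A * (B / N)) by (replace B with (N - A) by lra; field; lra).
    assert (HBN : eps <= B / N).
    { apply (Rmult_le_reg_r N); [lra|]. field_simplify; lra. }
    assert (HBN1 : B / N <= 1/2).
    { apply (Rmult_le_reg_r N); [lra|]. field_simplify; lra. }
    assert (HA2 : A * (B / N) >= N / 2 * eps) by nra.
    destruct (le_lt_dec (2*k) n2) as [Hn2|Hn2].
    + assert (Hn2lt : (n2 < n)%nat) by (apply INR_lt; fold B N; lra).
      pose proof (IH n2 Hn2lt Hn2) as IH2. fold B K in IH2.
      pose proof (ln_bound B N HBp ltac:(lra)) as LB.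
      assert (EB : B * (1 - B / N) = B * (A / N)) by (replace A with (N - B) by lra; field; lra).
      assert (HAN : 1/2 <= A / N).
      { apply (Rmult_le_reg_r N); [lra|]. field_simplify; lra. }
      assert (HB2 : B * (A / N) >= eps * N / 2) by nra.
      set (D := N * ln N - A * ln A - B * ln B).
      assert (HD : D >= eps * N).
      { unfold D. replace N with (A + B) at 1 by lra. nra. }
      assert (c * / eps * D >= c * N).
      { assert (c * / eps * D >= c * / eps * (eps * N)) by (apply Rle_ge, Rmult_le_compat_l; nra).
        nra. }
      rewrite Hce. unfold D in *. nra.
    + assert (Hn2s : (n2 <= 4*k)%nat) by lia.
      pose proof (H1 n2 Hn2s) as Hf2. rewrite plus_INR in Hf2. fold B K in Hf2.
      assert (HB2K : B < 2 * K).
      { replace (2*K) with (INR (2*k)) by (rewrite mult_INR; simpl; fold K; lra). apply lt_INR; auto. }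
      assert (c' * (B+K) <= c * (B+K)) by (apply Rmult_le_compat_r; lra).
      assert (HlnN2 : 2 <= ln N).
      { apply ln_ge_of; [lra|]. replace 2 with (1+1) by lra. rewrite exp_plus.
        pose proof exp_le_3. pose proof (exp_pos 1). nra. }
      set (D := N * ln N - A * ln A).
      assert (HD : D >= eps * B + eps * (N + 2 * K)).
      { assert (D = A * (ln N - ln A) + B * ln N) by (unfold D; replace N with (A + B) at 1 by lra; ring).
        assert (A * (B / N) >= B / 2).
        { replace (A * (B/N)) with (B * (A/N)) by (field; lra).
          assert (1/2 <= A / N) by (apply (Rmult_le_reg_r N); [lra|]; field_simplify; lra). nra. }
        assert (B * ln N >= eps * N * 2) by nra.
        nra. }
      assert (c * / eps * D >= c * (B + N + 2 * K)).
      { assert (c * / eps * D >= c * / eps * (eps * (B + N + 2*K))) by (apply Rle_ge, Rmult_le_compat_l; nra).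
        nra. }
      rewrite Hce. unfold D in *. nra.
Qed.
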